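(* Let $J,\mathbf{J},\mathbf{S},\mathbf{U},\mathbf{V},\mathbf{K}$ and $\mathbf{\Xi}$ be as in one of the three cases (continuous, semi-discrete, fully discrete) of the NLS solution construction, with $\mathbf{K}$ invertible, and let $\mathbf{\Pi}$ be a constant invertible $n\times n$ matrix with $\mathbf{J}\mathbf{\Pi}=-\mathbf{\Pi}\mathbf{J}$. Define $\mathbf{S}'=-\mathbf{\Pi}\mathbf{S}\mathbf{\Pi}^{-1}$ in the continuous case and $\mathbf{S}'=\mathbf{\Pi}\mathbf{S}^{-1}\mathbf{\Pi}^{-1}$ in the discrete cases, and $\mathbf{U}'=-\mathbf{U}\mathbf{K}^{-1}\mathbf{\Pi}^{-1}$, $\mathbf{V}'=\mathbf{\Pi}\mathbf{K}^{-1}\mathbf{V}$, $\mathbf{K}'=\mathbf{\Pi}\mathbf{K}^{-1}\mathbf{\Pi}^{-1}$. Then $(\mathbf{J},\mathbf{S}',\mathbf{U}',\mathbf{V}',\mathbf{K}')$ satisfy the same commutation relations and the same Sylvester equation as the original data, the associated matrix is $\mathbf{\Xi}'=\mathbf{\Pi}\mathbf{\Xi}^{-1}\mathbf{\Pi}^{-1}$, and the associated functions satisfy $\mathcal{U}'=\mathcal{U}$ and $\mathcal{D}'=\mathcal{D}+\mathbf{U}\mathbf{K}^{-1}\mathbf{V}$ (the latter summand being constant).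
   Context: Setting: $J\in\mathrm{Mat}(m,m,\mathbb{C})$ with $J^2=I_m$; constant complex $\mathbf{J},\mathbf{S},\mathbf{K}$ ($n\times n$), $\mathbf{U}$ ($m\times n$), $\mathbf{V}$ ($n\times m$) with $\mathbf{J}^2=\mathbf{I}$, $\mathbf{J}\mathbf{S}=\mathbf{S}\mathbf{J}$, $J\mathbf{U}=-\mathbf{U}\mathbf{J}$, $\mathbf{J}\mathbf{V}=\mathbf{V}J$, $\mathbf{J}\mathbf{K}=-\mathbf{K}\mathbf{J}$. Sylvester equation: $\mathbf{S}\mathbf{K}+\mathbf{K}\mathbf{S}=\mathbf{V}\mathbf{U}$ (continuous) or $\mathbf{S}^{-1}\mathbf{K}-\mathbf{K}\mathbf{S}=\mathbf{V}\mathbf{U}$ (discrete, $\mathbf{S}$ invertible). $\mathbf{\Xi}=e^{-x\mathbf{S}-\mathrm{i}t\mathbf{S}^2\mathbf{J}}$ (continuous), $\mathbf{\Xi}=\mathbf{S}^xe^{-\mathrm{i}t(\mathbf{S}+\mathbf{S}^{-1}-2\mathbf{I})\mathbf{J}}$ (semi-discrete), $\mathbf{\Xi}=\mathbf{S}^x[(\mathbf{I}+\mathrm{i}\mathbf{J}(\mathbf{I}-\mathbf{S}^{-1}))(\mathbf{I}-\mathrm{i}\mathbf{J}(\mathbf{I}-\mathbf{S}))^{-1}]^t$ (fully discrete). Associated functions: $\mathcal{U}=\mathbf{U}(\mathbf{\Xi}^{-1}-\mathbf{K}\mathbf{\Xi}\mathbf{K})^{-1}\mathbf{V}$, $\mathcal{D}=\mathbf{U}\mathbf{\Xi}\mathbf{K}(\mathbf{\Xi}^{-1}-\mathbf{K}\mathbf{\Xi}\mathbf{K})^{-1}\mathbf{V}$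 (assumed to exist); primed quantities are built the same way from primed data. *)

(* Defs.v *)
From HB Require Import structures.
From mathcomp Require Import all_boot all_order all_algebra.
Set Implicit Arguments. Unset Strict Implicit. Unset Printing Implicit Defensive.
Import Order.TTheory GRing.Theory Num.Theory.
Local Open Scope ring_scope.

(* The complex field is modelled as a Cauchy-complete archimedean
   numeric closed field (this characterizes C up to isomorphism). *)

Definition cvgC (C : numClosedFieldType) (u : nat -> C) (l : C) : Prop :=
  forall e : C, 0 < e -> exists N : nat, forall k : nat, (N <= k)%N -> `|u k - l| < e.

Definition cauchyC (C : numClosedFieldType) (u : nat -> C) : Prop :=
  forall e : C, 0 < e -> exists N : nat, forall k l : nat,
    (N <= k)%N -> (N <= l)%N -> `|u k - u l| < e.

Definition completeC (C : numClosedFieldType) : Prop :=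
  forall u : nat -> C, cauchyC u -> exists l, cvgC u l.

Definition mxexp_is (C : numClosedFieldType) (n : nat) (A E : 'M[C]_n.+1) : Prop :=
  forall i j : 'I_n.+1,
    cvgC (fun k : nat => (\sum_(l < k) (l`!%:R)^-1 *: A ^+ l) i j) (E i j).

Inductive nls_case := Continuous | SemiDiscrete | FullyDiscrete.

Definition sylvester (C : numClosedFieldType) (c : nls_case) (m n : nat)
  (S K : 'M[C]_n.+1) (U : 'M[C]_(m, n.+1)) (V : 'M[C]_(n.+1, m)) : Prop :=
  match c with
  | Continuous => S * K + K * S = V *m U
  | _ => S^-1 * K - K * S = V *m U
  end.

Definition Xi_is (C : numClosedFieldType) (c : nls_case) (n : nat)
  (JJ S : 'M[C]_n.+1) (x t : C) (Xi : 'M[C]_n.+1) : Prop :=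
  match c with
  | Continuous =>
      x \is Num.real /\ t \is Num.real /\
      mxexp_is (- (x *: S) - ('i * t) *: (S * S * JJ)) Xi
  | SemiDiscrete =>
      t \is Num.real /\
      exists (k : int) (E : 'M[C]_n.+1), x = k%:~R /\
        mxexp_is (- ('i * t) *: ((S + S^-1 - 2%:R) * JJ)) E /\
        Xi = S ^ k * E
  | FullyDiscrete =>
      exists k l : int, x = k%:~R /\ t = l%:~R /\
        Xi = S ^ k * ((1 + 'i *: (JJ * (1 - S^-1))) * (1 - 'i *: (JJ * (1 - S)))^-1) ^ l
  end.

Definition Ufun (C : numClosedFieldType) (m n : nat) (U : 'M[C]_(m, n.+1))
  (V : 'M[C]_(n.+1, m)) (K Xi : 'M[C]_n.+1) : 'M[C]_m :=
  U *m (Xi^-1 - K * Xi * K)^-1 *m V.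

Definition Dfun (C : numClosedFieldType) (m n : nat) (U : 'M[C]_(m, n.+1))
  (V : 'M[C]_(n.+1, m)) (K Xi : 'M[C]_n.+1) : 'M[C]_m :=
  U *m (Xi * K * (Xi^-1 - K * Xi * K)^-1) *m V.

Definition S_prime (C : numClosedFieldType) (c : nls_case) (n : nat)
  (Pi S : 'M[C]_n.+1) : 'M[C]_n.+1 :=
  match c with
  | Continuous => - (Pi * S * Pi^-1)
  | _ => Pi * S^-1 * Pi^-1
  end.

(* Main.v *)
Require Import Defs.
From HB Require Import structures.
From mathcomp Require Import all_boot all_order all_algebra.
Set Implicit Arguments. Unset Strict Implicit. Unset Printing Implicit Defensive.
Import Order.TTheory GRing.Theory Num.Theory.
Local Open Scope ring_scope.


Section Conj.
Variables (C : fieldType) (n : nat).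
Local Notation M := 'M[C]_n.+1.
Variables (P : M).
Hypothesis hP : P \is a GRing.unit.
Definition cj (X : M) : M := P * X * P^-1.

Lemma cjM X Y : cj (X * Y) = cj X * cj Y.
Proof. by rewrite /cj !mulrA divrK. Qed.
Lemma cjD X Y : cj (X + Y) = cj X + cj Y.
Proof. by rewrite /cj mulrDr mulrDl. Qed.
Lemma cjN X : cj (- X) = - cj X.
Proof. by rewrite /cj mulrN mulNr. Qed.
Lemma cjB X Y : cj (X - Y) = cj X - cj Y.
Proof. by rewrite cjD cjN. Qed.
Lemma cj1 : cj 1 = 1.
Proof. by rewrite /cj mulr1 divrr. Qed.
Lemma cjZ a X : cj (a *: X) = a *: cj X.
Proof. by rewrite /cj -scalerAr -scalerAl. Qed.
Lemma cj_nat k : cj k%:R = k%:R.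
Proof. by rewrite /cj (commr_nat P) mulrK. Qed.
Lemma cj_unit X : (cj X \is a GRing.unit) = (X \is a GRing.unit).
Proof.
rewrite /cj -!mulmxE.
change ((P *m X *m P^-1 \in unitmx) = (X \in unitmx)).
rewrite !unitmx_mul.
have hP' : P \in unitmx by [].
have hPV : P^-1 \in unitmx by have := unitrV P; rewrite hP.
by rewrite hP' hPV andbT.
Qed.
Lemma cjV X : cj (X^-1) = (cj X)^-1.
Proof.
case hX: (X \is a GRing.unit).
  apply: (mulrI (x := cj X)); first by rewrite cj_unit.
  by rewrite -cjM (divrr hX) cj1 divrr // cj_unit.
by rewrite (invr_out (negbT hX)) invr_out // cj_unit hX.
Qed.
Lemma cjXn X k : cj (X ^+ k) = cj X ^+ k.
Proof.
elim: k => [|k IH]; first by rewrite !expr0 cj1.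
by rewrite !exprS cjM IH.
Qed.
Lemma cjXz X (k : int) : cj (X ^ k) = cj X ^ k.
Proof.
case: k => k; first by rewrite -!exprnP cjXn.
by rewrite !NegzE -!invr_expz -!exprnP cjV cjXn.
Qed.
Lemma cjC X Y : GRing.comm X Y -> GRing.comm (cj X) (cj Y).
Proof. by move=> h; rewrite /GRing.comm -!cjM h. Qed.

Variable JJ : M.
Hypothesis hJ : JJ * P = - (P * JJ).
Lemma PVJ : P^-1 * JJ = - (JJ * P^-1).
Proof.
apply: (mulrI (x := P)) => //.
rewrite mulrA divrr // mul1r mulrN mulrA -[P * JJ]opprK -hJ mulNr opprK.
by rewrite -mulrA divrr // mulr1.
Qed.
Lemma cjJl X : JJ * cj X = - cj (JJ * X).
Proof. by rewrite /cj !mulrA hJ !mulNr. Qed.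
Lemma cjJr X : cj X * JJ = - cj (X * JJ).
Proof. by rewrite /cj -!mulrA PVJ !mulrN. Qed.
End Conj.


Section Norm.
Variables (C : numFieldType) (n : nat).
Local Notation M := 'M[C]_n.+1.
Definition nm (X : M) : C := \sum_i \sum_j `|X i j|.
Implicit Types X Y : M.

Lemma nm_ge0 X : 0 <= nm X.
Proof. by apply: sumr_ge0 => i _; apply: sumr_ge0. Qed.
Lemma nm_row X i : \sum_j `|X i j| <= nm X.
Proof.
rewrite /nm [X in _ <= X](bigD1 i) //= lerDl; apply: sumr_ge0 => k _; exact: sumr_ge0.
Qed.
Lemma nm_entry X i j : `|X i j| <= nm X.
Proof.
apply: le_trans (nm_row X i).
by rewrite [X in _ <= X](bigD1 j) //= lerDl; apply: sumr_ge0.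
Qed.
Lemma nmD X Y : nm (X + Y) <= nm X + nm Y.
Proof.
rewrite /nm -big_split; apply: ler_sum => i _.
rewrite -big_split; apply: ler_sum => j _; rewrite mxE; exact: ler_normD.
Qed.
Lemma nmN X : nm (- X) = nm X.
Proof. by apply: eq_bigr => i _; apply: eq_bigr => j _; rewrite mxE normrN. Qed.
Lemma nmZ a X : nm (a *: X) = `|a| * nm X.
Proof.
rewrite /nm mulr_sumr; apply: eq_bigr => i _.
rewrite mulr_sumr; apply: eq_bigr => j _; by rewrite mxE normrM.
Qed.
Lemma nm0 : nm 0 = 0.
Proof. by rewrite /nm big1 // => i _; rewrite big1 // => j _; rewrite mxE normr0. Qed.
Lemma nmM X Y : nm (X * Y) <= nm X * nm Y.
Proof.
rewrite /nm mulr_suml; apply: ler_sum => i _.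
rewrite mulr_suml.
apply: (@le_trans _ _ (\sum_j \sum_k `|X i k| * `|Y k j|)).
  apply: ler_sum => j _; rewrite -mulmxE mxE.
  apply: le_trans (ler_norm_sum _ _ _) _.
  by apply: ler_sum => k _; rewrite normrM.
rewrite exchange_big /=; apply: ler_sum => k _.
rewrite -mulr_sumr; apply: ler_wpM2l => //.
exact: nm_row.
Qed.
Lemma nmB X Y : nm (X - Y) = nm (Y - X).
Proof. by rewrite -nmN opprB. Qed.
Lemma nm_sum (I : Type) (r : seq I) (F : I -> M) :
  nm (\sum_(i <- r) F i) <= \sum_(i <- r) nm (F i).
Proof.
elim/big_rec2: _ => [|i y1 y2 _ H]; first by rewrite nm0.
apply: le_trans (nmD _ _) _; exact: lerD.
Qed.
Lemma nmXn X k : nm (X ^+ k) <= nm 1 * nm X ^+ k.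
Proof.
elim: k => [|k IH]; first by rewrite !expr0 mulr1.
rewrite !exprSr; apply: le_trans (nmM _ _) _.
by rewrite mulrA; apply: ler_wpM2r => //; exact: nm_ge0.
Qed.
Lemma nm_eq0 X : (forall e, 0 < e -> nm X <= e) -> X = 0.
Proof.
move=> H; apply/matrixP => i j; rewrite mxE.
apply/eqP; rewrite -normr_eq0; apply/eqP.
have h0 := normr_ge0 (X i j).
have h1 := nm_entry X i j.
case: (boolP (nm X == 0)) => hX0.
  by apply/eqP; rewrite eq_le h0 andbT -(eqP hX0).
have hX : 0 < nm X by rewrite lt0r hX0 nm_ge0.
have := H (nm X / 2) (divr_gt0 hX (ltr0Sn _ 1)).
rewrite ler_pdivlMr // => h2.
have : nm X * 2 <= nm X * 1 by rewrite mulr1.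
rewrite ler_pM2l // => h; have h3 : (1 : C) < 2 by rewrite ltr1n.
by have := lt_le_trans h3 h; rewrite ltxx.
Qed.
End Norm.


Section Cv.
Variable C : archiNumFieldType.
Implicit Types u v w : nat -> C.
Definition cv0 u := forall e : C, 0 < e -> exists N, forall k, (N <= k)%N -> u k <= e.

Lemma cv0_le u w : (exists N0, forall k, (N0 <= k)%N -> w k <= u k) -> cv0 u -> cv0 w.
Proof.
move=> [N0 H0] H e he; have [N HN] := H e he.
exists (maxn N0 N) => k hk.
apply: le_trans (H0 _ _) (HN _ _).
  exact: leq_trans (leq_maxl _ _) hk.
exact: leq_trans (leq_maxr _ _) hk.
Qed.
Lemma cv0_add u v : cv0 u -> cv0 v -> cv0 (fun k => u k + v k).
Proof.
move=> Hu Hv e he.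
have he2 : 0 < e / 2 by rewrite divr_gt0 // ltr0Sn.
have [N1 H1] := Hu _ he2; have [N2 H2] := Hv _ he2.
exists (maxn N1 N2) => k hk; rewrite [e]splitr; apply: lerD.
  apply: H1; exact: leq_trans (leq_maxl _ _) hk.
apply: H2; exact: leq_trans (leq_maxr _ _) hk.
Qed.
Lemma cv0_scal c u : 0 <= c -> cv0 u -> cv0 (fun k => c * u k).
Proof.
move=> hc Hu e he.
have hc1 : 0 < c + 1 by rewrite ltr_wpDl // ltr01.
have he2 : 0 < e / (c + 1) by rewrite divr_gt0.
have [N HN] := Hu _ he2; exists N => k hk.
apply: le_trans (ler_wpM2l hc (HN k hk)) _.
rewrite mulrA ler_pdivrMr // mulrDr mulr1 mulrC lerDl; exact: ltW.
Qed.
Lemma cv0_sum (I : Type) (r : seq I) (F : I -> nat -> C) :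
  (forall i, cv0 (F i)) -> cv0 (fun k => \sum_(i <- r) F i k).
Proof.
move=> H; elim: r => [|x r IH].
  by move=> e he; exists 0%N => k _; rewrite big_nil ltW.
have := cv0_add (H x) IH; apply: cv0_le; exists 0%N => k _.
by rewrite big_cons.
Qed.

Definition tt (b : C) (s : nat) : C := b ^+ s / (s`!)%:R.

Lemma fact_neq0 s : (s`!)%:R != 0 :> C.
Proof. by rewrite pnatr_eq0 -lt0n fact_gt0. Qed.

Lemma ttS b s : tt b s.+1 = tt b s * (b / (s.+1)%:R).
Proof.
rewrite /tt factS natrM invfM exprSr.
rewrite [(s.+1)%:R^-1 * _]mulrC mulrACA //.
Qed.
Lemma tt_ge0 b s : 0 <= b -> 0 <= tt b s.
Proof. by move=> hb; rewrite /tt divr_ge0 // exprn_ge0. Qed.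

Lemma tt_K0 b : 0 <= b -> exists K0, forall s, (K0 <= s)%N -> 2 * tt b s.+1 <= tt b s.
Proof.
move=> hb; exists (Num.bound (2 * b)) => s hs.
rewrite ttS mulrCA; apply: ler_piMr; first exact: tt_ge0.
rewrite mulrA ler_pdivrMr ?ltr0Sn // mul1r.
apply: le_trans (ltW (archi_boundP _)) _; first by rewrite mulr_ge0.
by rewrite ler_nat (leq_trans hs).
Qed.

Lemma tail_aux b K0 k : 0 <= b ->
  (forall s, (K0 <= s)%N -> 2 * tt b s.+1 <= tt b s) -> (K0 <= k)%N ->
  forall j, \sum_(i < j) tt b (k + i) + 2 * tt b (k + j) <= 2 * tt b k.
Proof.
move=> hb hK hk; elim => [|j IH]; first by rewrite big_ord0 add0r addn0.
rewrite big_ord_recr /= -addrA; apply: le_trans IH.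
rewrite addnS.
apply: lerD; first exact: lexx.
have := hK (k + j)%N (leq_trans hk (leq_addr _ _)).
move=> h; apply: le_trans (lerD (lexx _) h) _.
by rewrite mulr_natl mulr2n.
Qed.
Lemma tail_le b K0 k j : 0 <= b ->
  (forall s, (K0 <= s)%N -> 2 * tt b s.+1 <= tt b s) -> (K0 <= k)%N ->
  \sum_(i < j) tt b (k + i) <= 2 * tt b k.
Proof.
move=> hb hK hk; apply: le_trans _ (tail_aux hb hK hk j).
by rewrite lerDl mulr_ge0 // tt_ge0.
Qed.

Lemma decay b K0 : 0 <= b ->
  (forall s, (K0 <= s)%N -> 2 * tt b s.+1 <= tt b s) ->
  forall m, tt b (K0 + m) * (m.+1)%:R <= tt b K0.
Proof.
move=> hb hK m.
have h2 : forall m, tt b (K0 + m) * 2 ^+ m <= tt b K0.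
  elim => [|k IH]; first by rewrite addn0 expr0 mulr1.
  apply: le_trans IH; rewrite exprS mulrA addnS.
  apply: ler_wpM2r; first exact: exprn_ge0.
  by rewrite mulrC; apply: hK; exact: leq_addr.
apply: le_trans (h2 m); apply: ler_wpM2l; first exact: tt_ge0.
by rewrite -natrX ler_nat ltn_expl.
Qed.

Lemma cv0_tt b : 0 <= b -> cv0 (tt b).
Proof.
move=> hb; have [K0 hK] := tt_K0 hb.
move=> e he.
have hq : 0 <= tt b K0 / e by rewrite divr_ge0 ?tt_ge0 // ltW.
exists (K0 + Num.bound (tt b K0 / e))%N => k hk.
have hkK : (K0 <= k)%N by exact: leq_trans (leq_addr _ _) hk.
have hm : (Num.bound (tt b K0 / e) <= k - K0)%N by rewrite leq_subRL.
have := decay hb hK (k - K0); rewrite subnKC // => hd.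
have hlt : tt b K0 < (k - K0).+1%:R * e.
  rewrite -ltr_pdivrMr //; apply: lt_le_trans (archi_boundP hq) _.
  by rewrite ler_nat ltnW.
have := le_lt_trans hd hlt; rewrite [_ * e]mulrC ltr_pM2r ?ltr0Sn // => h.
exact: ltW.
Qed.

Lemma sum_mono (F : nat -> C) k j : (forall s, 0 <= F s) ->
  \sum_(s < k) F s <= \sum_(s < k + j) F s.
Proof.
move=> hF; elim: j => [|j IH]; first by rewrite addn0.
apply: le_trans IH _; rewrite addnS big_ord_recr /= lerDl; exact: hF.
Qed.
Lemma sum_split (F : nat -> C) K j :
  \sum_(s < K + j) F s = \sum_(s < K) F s + \sum_(i < j) F (K + i)%N.
Proof.
elim: j => [|j IH]; first by rewrite addn0 big_ord0 addr0.
by rewrite addnS !big_ord_recr /= IH addrA.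
Qed.

Lemma tt_bounded b : 0 <= b -> exists B, forall k, \sum_(s < k) tt b s <= B.
Proof.
move=> hb; have [K0 hK] := tt_K0 hb.
exists (\sum_(s < K0) tt b s + 2 * tt b K0) => k.
apply: le_trans (sum_mono k K0 (fun s => tt_ge0 s hb)) _.
rewrite addnC sum_split; apply: lerD; first exact: lexx.
exact: (tail_le k hb hK (leqnn K0)).
Qed.

Lemma tail_ind b : 0 <= b -> exists K0, forall k L, (K0 <= k)%N ->
  \sum_(s < L) (if (k <= s)%N then tt b s else 0) <= 2 * tt b k.
Proof.
move=> hb; have [K0 hK] := tt_K0 hb; exists K0 => k L hk.
set G := fun s => if (k <= s)%N then tt b s else 0.
have hG : forall s, 0 <= G s by move=> s; rewrite /G; case: ifP => // _; exact: tt_ge0.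
apply: le_trans (sum_mono L k hG) _.
rewrite addnC sum_split big1 ?add0r; last by move=> i _; rewrite /G leqNgt ltn_ord.
rewrite (eq_bigr (fun i : 'I_L => tt b (k + i))); last by move=> i _; rewrite /G leq_addr.
exact: (tail_le L hb hK hk).
Qed.
End Cv.

Section Exp.
Variables (C : archiClosedFieldType) (n : nat).
Local Notation M := 'M[C]_n.+1.
Implicit Types A X : M.
Definition psum A k : M := \sum_(l < k) (l`!%:R)^-1 *: A ^+ l.

Lemma mxexp_cv0 A X : mxexp_is A X <-> cv0 (fun k => nm (psum A k - X)).
Proof.
split => H.
  have Hij : forall i j, cv0 (fun k => `|(psum A k - X) i j|).
    move=> i j e he; have [N HN] := H i j e he; exists N => k hk.
    rewrite !mxE; exact: ltW (HN k hk).
  rewrite /nm; apply: cv0_sum => i; exact: cv0_sum.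
move=> i j e he.
have he2 : 0 < e / 2 by rewrite divr_gt0 // ltr0Sn.
have [N HN] := H _ he2; exists N => k hk.
have := nm_entry (psum A k - X) i j; rewrite !mxE => h.
apply: le_lt_trans h _; apply: le_lt_trans (HN k hk) _.
by rewrite ltr_pdivrMr ?ltr0Sn // ltr_pMr // ltr1n.
Qed.

Definition pe k : {poly C} := \poly_(i < k) (i`!%:R)^-1.
Definition qe k : {poly C} := \poly_(i < k) ((-1) ^+ i / i`!%:R).

Lemma psum_pe A k : psum A k = horner_mx A (pe k).
Proof.
rewrite /pe poly_def linear_sum /=; apply: eq_bigr => i _.
by rewrite linearZ /= rmorphXn /= horner_mx_X.
Qed.
Lemma psum_qe A k : psum (- A) k = horner_mx A (qe k).
Proof.
rewrite /qe poly_def linear_sum /=; apply: eq_bigr => i _.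
rewrite linearZ /= rmorphXn /= horner_mx_X.
by rewrite -scaleN1r exprZn scalerA mulrC.
Qed.

Lemma nm_horner A (r : {poly C}) :
  nm (horner_mx A r) <= \sum_(s < size r) `|r`_s| * (nm (1 : M) * nm A ^+ s).
Proof.
rewrite -{1}(coefK r) poly_def linear_sum /=.
apply: le_trans (nm_sum _ _) _; apply: ler_sum => s _.
rewrite linearZ /= rmorphXn /= horner_mx_X nmZ.
apply: ler_wpM2l; [exact: normr_ge0 | exact: nmXn].
Qed.

Lemma binom_fact (x y : C) s :
  \sum_(j < s.+1) x ^+ (s - j) * y ^+ j / ((s - j)`!%:R * j`!%:R)
  = (x + y) ^+ s / s`!%:R.
Proof.
rewrite exprDn mulr_suml; apply: eq_bigr => j _.
have hj : (j <= s)%N := leq_ord j.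
have hC : ('C(s, j))%:R != 0 :> C by rewrite pnatr_eq0 -lt0n bin_gt0.
have hf : ('C(s, j))%:R / (s`!)%:R = ((s - j)`!%:R * j`!%:R)^-1 :> C.
  rewrite -(bin_fact hj) !natrM invfM mulrA mulfV // mul1r.
  by rewrite [(_ * (s - j)`!%:R)]mulrC.
by rewrite -[_ *+ 'C(s, j)]mulr_natr -[RHS]mulrA hf.
Qed.

Lemma coef_peqe_lt k s : (s < k)%N -> (pe k * qe k)`_s = (s == 0)%:R.
Proof.
move=> hs; rewrite coefM.
rewrite (eq_bigr (fun j : 'I_s.+1 =>
   (-1) ^+ (s - j) * 1 ^+ j / ((s - j)`!%:R * j`!%:R))); last first.
  move=> j _; rewrite /pe /qe !coef_poly.
  have hj : (j < k)%N by apply: leq_ltn_trans hs; exact: leq_ord.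
  have hj' : (s - j < k)%N by apply: leq_ltn_trans hs; exact: leq_subr.
  rewrite hj hj' expr1n mulr1 invfM mulrCA; congr (_ * _); exact: mulrC.
rewrite binom_fact addNr expr0n; case: s hs => [|s] _ /=.
  by rewrite invr1 mulr1.
by rewrite mul0r.
Qed.

Lemma coef_peqe_bound k s : `|(pe k * qe k)`_s| <= 2 ^+ s / s`!%:R.
Proof.
rewrite coefM; apply: le_trans (ler_norm_sum _ _ _) _.
apply: (@le_trans _ _ ((1 + 1) ^+ s / s`!%:R)); last exact: lexx.
rewrite -binom_fact; apply: ler_sum => j _.
rewrite !expr1n !mul1r normrM invfM [X in _ <= X]mulrC.
have hf : forall i, 0 <= (i`!%:R : C)^-1 by move=> i; rewrite invr_ge0 ler0n.
apply: ler_pM; try exact: normr_ge0.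
  rewrite /pe coef_poly; case: ifP => _; last by rewrite normr0.
  by rewrite ger0_norm.
rewrite /qe coef_poly; case: ifP => _; last by rewrite normr0.
by rewrite normrM normrX normrN normr1 expr1n mul1r ger0_norm.
Qed.

Lemma coef_r_bound k s : (0 < k)%N ->
  `|(pe k * qe k - 1)`_s| <= if (k <= s)%N then 2 ^+ s / s`!%:R else 0.
Proof.
move=> hk; rewrite coefB coef1; case: ifP => hks.
  have -> : (s == 0%N) = false by apply/negbTE; rewrite -lt0n; exact: leq_trans hks.
  by rewrite subr0; exact: coef_peqe_bound.
rewrite coef_peqe_lt ?subrr ?normr0 //; by rewrite ltnNge hks.
Qed.

Lemma prod_bound A : exists K0, forall k, (K0 <= k)%N ->
  nm (psum A k * psum (- A) k - 1) <= nm (1 : M) * (2 * tt (2 * nm A) k).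
Proof.
have ha : 0 <= 2 * nm A by rewrite mulr_ge0 // nm_ge0.
have [K1 HK1] := tail_ind ha.
exists (maxn 1 K1) => k hk.
have hk1 : (0 < k)%N by exact: leq_trans (leq_maxl _ _) hk.
have hkK : (K1 <= k)%N by exact: leq_trans (leq_maxr _ _) hk.
rewrite psum_pe psum_qe.
have -> : horner_mx A (pe k) * horner_mx A (qe k) - 1 = horner_mx A (pe k * qe k - 1).
  by rewrite rmorphB rmorphM rmorph1.
apply: le_trans (nm_horner _ _) _.
set r := (pe k * qe k - 1).
apply: le_trans _ (ler_wpM2l (nm_ge0 (1 : M)) (HK1 k (size r) hkK)).
rewrite mulr_sumr; apply: ler_sum => s _.
have hb := coef_r_bound s hk1.
have h1 : 0 <= nm (1 : M) * nm A ^+ s by rewrite mulr_ge0 ?exprn_ge0 ?nm_ge0.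
apply: le_trans (ler_wpM2r h1 hb) _.
case: ifP => _; last by rewrite !mul0r mulr0.
rewrite /tt exprMn mulrCA; apply: ler_wpM2l; first exact: nm_ge0.
by rewrite mulrAC.
Qed.
End Exp.

Section Exp2.
Variables (C : archiClosedFieldType) (n : nat).
Local Notation M := 'M[C]_n.+1.
Implicit Types A X : M.

Lemma nm_psum A k : nm (psum A k) <= nm (1 : M) * \sum_(l < k) tt (nm A) l.
Proof.
rewrite /psum; apply: le_trans (nm_sum _ _) _; rewrite mulr_sumr.
apply: ler_sum => l _; rewrite nmZ /tt.
have h0 : 0 <= (l`!%:R : C)^-1 by rewrite invr_ge0 ler0n.
rewrite ger0_norm //.
rewrite mulrA [X in _ <= X]mulrC; apply: ler_wpM2l => //; exact: nmXn.
Qed.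

Lemma mxexp_neg A X : mxexp_is A X -> X \is a GRing.unit -> mxexp_is (- A) X^-1.
Proof.
move=> /mxexp_cv0 HX hX; apply/mxexp_cv0.
have [K0 HK] := prod_bound A.
have [B HB] := tt_bounded (nm_ge0 (- A)).
have h1 := nm_ge0 (1 : M).
have hV := nm_ge0 X^-1.
have hB : 0 <= B by apply: le_trans (HB 0%N); rewrite big_ord0.
have ha : 0 <= 2 * nm A by rewrite mulr_ge0 // nm_ge0.
have Hu : cv0 (fun k => nm X^-1 * (nm (1 : M) * B) * nm (psum A k - X)
            + nm X^-1 * (nm (1 : M) * 2) * tt (2 * nm A) k).
  apply: cv0_add; apply: cv0_scal; rewrite ?mulr_ge0 //; last exact: cv0_tt.
refine (cv0_le _ Hu).
exists K0 => k hk.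
set P := psum A k; set Q := psum (- A) k.
have e : Q - X^-1 = X^-1 * ((X - P) * Q + (P * Q - 1)).
  rewrite mulrBl addrA subrK mulrBr mulKr // mulr1 //.
rewrite e; apply: le_trans (nmM _ _) _.
rewrite -!mulrA -mulrDr; apply: ler_wpM2l => //.
apply: le_trans (nmD _ _) _; apply: lerD.
  apply: le_trans (nmM _ _) _; rewrite nmB mulrA [X in X <= _]mulrC.
  apply: ler_wpM2r; first exact: nm_ge0.
  by apply: le_trans (nm_psum _ _) _; apply: ler_wpM2l.
exact: HK.
Qed.

Lemma cj0 P : cj P 0 = 0 :> M.
Proof. by rewrite /cj mulr0 mul0r. Qed.

Lemma mxexp_conj A X P : mxexp_is A X -> P \is a GRing.unit ->
  mxexp_is (cj P A) (cj P X).
Proof.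
move=> /mxexp_cv0 HX hP; apply/mxexp_cv0.
have hps : forall k, psum (cj P A) k = cj P (psum A k).
  move=> k; rewrite /psum (big_morph (cj P) (cjD P) (cj0 P)).
  by apply: eq_bigr => l _; rewrite cjZ // cjXn.
have Hu : cv0 (fun k => nm P * nm P^-1 * nm (psum A k - X)).
  apply: cv0_scal; first by rewrite mulr_ge0 ?nm_ge0.
  exact: HX.
refine (cv0_le _ Hu).
  exists 0%N => k _; rewrite hps -cjB /cj.
  apply: le_trans (nmM _ _) _; rewrite [X in _ <= X]mulrAC.
  apply: ler_wpM2r; first exact: nm_ge0.
  exact: nmM.
Qed.

Lemma mxexp_comm A X B : mxexp_is A X -> A * B = B * A -> X * B = B * X.
Proof.
move=> /mxexp_cv0 HX hAB; apply/eqP; rewrite -subr_eq0; apply/eqP.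
apply: nm_eq0 => e he.
have hPB : forall k, psum A k * B = B * psum A k.
  move=> k; rewrite /psum mulr_suml mulr_sumr; apply: eq_bigr => l _.
  rewrite -scalerAl -scalerAr; congr (_ *: _).
  by rewrite -(commrX l (commr_sym hAB)).
have hB := nm_ge0 B.
have hD : 0 < 2 * nm B + 1 by rewrite ltr_wpDl ?mulr_ge0 // ltr01.
have he' : 0 < e / (2 * nm B + 1) by rewrite divr_gt0.
have [N HN] := HX _ he'.
have := HN N (leqnn N); set P := psum A N => hN.
have -> : X * B - B * X = (X - P) * B - B * (X - P).
  by rewrite mulrBl mulrBr hPB opprB addrA subrK addrC.
apply: le_trans (nmD _ _) _; rewrite nmN.
apply: le_trans (lerD (nmM _ _) (nmM _ _)) _.
rewrite [nm B * _]mulrC nmB -mulrDl.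
have h3 := ler_wpM2r hB (lerD hN hN).
apply: (le_trans h3).
set e' := e / (2 * nm B + 1).
have -> : (e' + e') * nm B = e' * (2 * nm B) by rewrite mulrA (mulr_natr e' 2) mulr2n.
have h2 : 2 * nm B <= 2 * nm B + 1 by rewrite lerDl ler01.
have h4 := ler_wpM2l (ltW he') h2; apply: (le_trans h4).
by rewrite divfK ?gt_eqF.
Qed.
End Exp2.

Section MainLemmas.
Variables (C : archiClosedFieldType) (n : nat).
Local Notation M := 'M[C]_n.+1.

Lemma commZ (a : C) (X Y : M) : GRing.comm X Y -> GRing.comm X (a *: Y).
Proof. by move=> h; rewrite /GRing.comm -scalerAl -scalerAr h. Qed.

Lemma mxmulE (X Y : M) : X *m Y = X * Y.
Proof. by []. Qed.

Lemma sandwich m (U : 'M[C]_(m, n.+1)) (V : 'M[C]_(n.+1, m)) (A B D : M) :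
  (- (U *m A)) *m B *m (D *m V) = U *m (- (A * B * D)) *m V.
Proof. by rewrite !(mulNmx, mulmxN) -!mxmulE !mulmxA. Qed.
End MainLemmas.

Unset Implicit Arguments.
Set Strict Implicit.

Theorem mainTheorem4 (C : archiClosedFieldType) (C_complete : completeC C)
  (c : nls_case) (m n : nat)
  (J : 'M[C]_m) (JJ S K Pi : 'M[C]_n.+1)
  (U : 'M[C]_(m, n.+1)) (V : 'M[C]_(n.+1, m)) (x t : C) (Xi : 'M[C]_n.+1) :
  J *m J = 1%:M ->
  JJ * JJ = 1 ->
  JJ * S = S * JJ ->
  J *m U = - (U *m JJ) ->
  JJ *m V = V *m J ->
  JJ * K = - (K * JJ) ->
  (c <> Continuous -> S \is a GRing.unit) ->
  sylvester c S K U V ->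
  K \is a GRing.unit ->
  Pi \is a GRing.unit ->
  JJ * Pi = - (Pi * JJ) ->
  (c = FullyDiscrete -> (1 - 'i *: (JJ * (1 - S))) \is a GRing.unit) ->
  Xi_is c JJ S x t Xi ->
  Xi \is a GRing.unit ->
  (Xi^-1 - K * Xi * K) \is a GRing.unit ->
  let S' := S_prime c Pi S in
  let U' := - (U *m (K^-1 * Pi^-1)) in
  let V' := (Pi * K^-1) *m V in
  let K' := Pi * K^-1 * Pi^-1 in
  let Xi' := Pi * Xi^-1 * Pi^-1 in
  (JJ * S' = S' * JJ /\ J *m U' = - (U' *m JJ) /\ JJ *m V' = V' *m J /\
   JJ * K' = - (K' * JJ)) /\
  sylvester c S' K' U' V' /\
  Xi_is c JJ S' x t Xi' /\
  Ufun U' V' K' Xi' = Ufun U V K Xi /\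
  Dfun U' V' K' Xi' = Dfun U V K Xi + U *m K^-1 *m V.
Proof.
move=> hJ2 hJJ hJS hJU hJV hJK hSu hSyl hK hP hJP hD hXi hXu hM.
move=> S' U' V' K' Xi'.
have KJ : K^-1 * JJ = - (JJ * K^-1) := PVJ hK hJK.
have JK : JJ * K^-1 = - (K^-1 * JJ) by rewrite KJ opprK.
have PJ : Pi^-1 * JJ = - (JJ * Pi^-1) := PVJ hP hJP.
have JPV : JJ * Pi^-1 = - (Pi^-1 * JJ) by rewrite PJ opprK.
have hK' : K' = cj Pi K^-1 by [].
have hXi' : Xi' = cj Pi Xi^-1 by [].
split.
  split; [|split; [|split]].
  - rewrite /S'; clear S'; case: c hSu {hSyl hD hXi} => hSu /=.
    + by rewrite mulrN mulNr -[Pi * S * Pi^-1]/(cj Pi S) (cjJl hJP) (cjJr hP hJP) hJS.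
    + have hS := hSu (fun e => ltac:(discriminate)).
      by rewrite -[Pi * S^-1 * Pi^-1]/(cj Pi S^-1) (cjJl hJP) (cjJr hP hJP) (commrV hJS).
    + have hS := hSu (fun e => ltac:(discriminate)).
      by rewrite -[Pi * S^-1 * Pi^-1]/(cj Pi S^-1) (cjJl hJP) (cjJr hP hJP) (commrV hJS).
  - rewrite /U' mulmxN mulNmx opprK mulmxA hJU mulNmx opprK -!mulmxA.
    congr (U *m _); rewrite !mxmulE.
    by rewrite PJ mulrN !mulrA JK mulNr.
  - rewrite /V' -[RHS]mulmxA -hJV !mulmxA; congr (_ *m V); rewrite !mxmulE.
    by rewrite hJP mulNr -(mulrA Pi JJ) JK mulrN opprK mulrA.
  - by rewrite hK' (cjJl hJP) (cjJr hP hJP) JK cjN opprK.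
split.
  rewrite /S' /U' /V' hK'; clear S' U' V' K' Xi' hK' hXi'.
  have e2 : (Pi * K^-1) *m V *m - (U *m (K^-1 * Pi^-1)) =
      - cj Pi (K^-1 * (V *m U) * K^-1).
    rewrite mulmxN -!mulmxA (mulmxA V U) !mxmulE /cj !mulrA //.
  case: c hSu hSyl {hD hXi} => hSu /= hSyl; rewrite e2 -hSyl.
  + have e1 : K^-1 * (S * K + K * S) * K^-1 = K^-1 * S + S * K^-1.
      by rewrite mulrDr mulrDl !mulrA mulrK // mulVr // mul1r.
    rewrite e1 -[Pi * S * Pi^-1]/(cj Pi S) mulNr mulrN -!(cjM hP) -opprD -cjD.
    by rewrite addrC.
  + have hS := hSu (fun e => ltac:(discriminate)).
    have e1 : K^-1 * (S^-1 * K - K * S) * K^-1 = K^-1 * S^-1 - S * K^-1.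
      by rewrite mulrBr mulrBl !mulrA mulrK // mulVr // mul1r.
    rewrite e1 -[Pi * S^-1 * Pi^-1]/(cj Pi S^-1) -(cjV hP) invrK -!(cjM hP) -cjB.
    by rewrite -cjN opprB.
  + have hS := hSu (fun e => ltac:(discriminate)).
    have e1 : K^-1 * (S^-1 * K - K * S) * K^-1 = K^-1 * S^-1 - S * K^-1.
      by rewrite mulrBr mulrBl !mulrA mulrK // mulVr // mul1r.
    rewrite e1 -[Pi * S^-1 * Pi^-1]/(cj Pi S^-1) -(cjV hP) invrK -!(cjM hP) -cjB.
    by rewrite -cjN opprB.
split.
  rewrite /S' hXi'; clear S' U' V' K' Xi' hK' hXi'.
  case: c hSu hSyl hD hXi => hSu hSyl hD /= hXi.
  + case: hXi => hx [ht hE]; split => //; split => //.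
    have H := mxexp_conj (mxexp_neg hE hXu) hP.
    set Y := _ - _ *: _ in hE.
    suff -> : - (x *: - (Pi * S * Pi^-1)) - ('i * t) *:
        (- (Pi * S * Pi^-1) * - (Pi * S * Pi^-1) * JJ) = cj Pi (- Y) by [].
    rewrite -[Pi * S * Pi^-1]/(cj Pi S) scalerN opprK mulrNN -(cjM hP) (cjJr hP hJP).
    rewrite scalerN opprK /Y opprB opprK cjD !cjZ addrC //.
  + have hS := hSu (fun e => ltac:(discriminate)).
    case: hXi => ht [k [E [hx [hE hXE]]]]; split => //.
    exists k, (cj Pi E^-1); split => //.
    have hXu2 := hXu; rewrite hXE in hXu2.
    move: hXu2; rewrite -mxmulE unitmx_mul => /andP [hSk hEu].
    have hAS : GRing.comm S (- ('i * t) *: ((S + S^-1 - 2%:R) * JJ)).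
      apply: commZ; apply: commrM; last exact: commr_sym.
      apply: commrB; last exact: commr_nat.
      apply: commrD; first exact: commr_refl.
      exact: commrV (commr_refl S).
    have hES : E * S = S * E := mxexp_comm hE (commr_sym hAS).
    split.
      have H := mxexp_conj (mxexp_neg hE hEu) hP.
      set Y := _ *: _ in hE.
      suff -> : - ('i * t) *: ((Pi * S^-1 * Pi^-1 + (Pi * S^-1 * Pi^-1)^-1 - 2%:R) * JJ)
         = cj Pi (- Y) by [].
      rewrite -[Pi * S^-1 * Pi^-1]/(cj Pi S^-1) -(cjV hP) invrK -(cj_nat hP 2).
      rewrite -cjD -cjB (cjJr hP hJP) scalerN /Y cjN cjZ.
      by rewrite [S^-1 + S]addrC.
    rewrite hXE invrM // -[Pi * S^-1 * Pi^-1]/(cj Pi S^-1) -(cjXz hP) -(cjM hP).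
    congr (cj Pi _).
    rewrite invr_expz -exprz_inv.
    have hc : GRing.comm E (S ^ k) by apply: commrXz; exact: hES.
    have hc2 : GRing.comm E^-1 (S^-1 ^ k).
      apply: commr_sym; apply: commrV; apply: commr_sym.
      rewrite exprz_inv -invr_expz; exact: commrV.
    exact: hc2.
  + have hS := hSu (fun e => ltac:(discriminate)).
    have hDu := hD erefl.
    case: hXi => k [l [hx [ht hXT]]]; exists k, l; split; first exact: hx.
    split; first exact: ht.
    have hXu2 := hXu; rewrite hXT in hXu2.
    move: hXu2; rewrite -mxmulE unitmx_mul => /andP [hSk hTl].
    set Nn := 1 + 'i *: (JJ * (1 - S^-1)) in hXT hTl *.
    set D := 1 - 'i *: (JJ * (1 - S)) in hDu hXT hTl *.
    have f3 : forall W, 1 - cj Pi W = cj Pi (1 - W) by move=> W; rewrite cjB cj1.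
    have f4 : forall W, 1 + cj Pi W = cj Pi (1 + W) by move=> W; rewrite cjD cj1.
    have eT : (1 + 'i *: (JJ * (1 - (Pi * S^-1 * Pi^-1)^-1))) *
        (1 - 'i *: (JJ * (1 - Pi * S^-1 * Pi^-1)))^-1 = cj Pi (D * Nn^-1).
      rewrite -[Pi * S^-1 * Pi^-1]/(cj Pi S^-1) -(cjV hP) invrK !f3 !(cjJl hJP).
      by rewrite !scalerN -!cjZ opprK f3 f4 -(cjV hP) -(cjM hP).
    rewrite eT -[Pi * S^-1 * Pi^-1]/(cj Pi S^-1).
    case: (eqVneq l 0) => hl.
      rewrite hl expr0z mulr1 in hXT *.
      by rewrite hXT invr_expz -exprz_inv (cjXz hP) expr0z mulr1.
    have hT : Nn * D^-1 \is a GRing.unit by rewrite -(unitr_n0expz _ hl).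
    move: (hT); rewrite -mxmulE unitmx_mul => /andP [hNu _].
    have hTV : (Nn * D^-1)^-1 = D * Nn^-1 by rewrite invrM ?unitrV // invrK.
    rewrite -(cjXz hP) -(cjXz hP) -(cjM hP); congr (cj Pi _).
    rewrite hXT invrM // !invr_expz -!exprz_inv hTV.
    have hST : GRing.comm S (Nn * D^-1).
      have hSJ : GRing.comm S JJ by exact: commr_sym.
      apply: commrM.
        apply: commrD; first exact: commr1.
        apply: commZ; apply: commrM => //; apply: commrB; first exact: commr1.
        exact: commrV (commr_refl S).
      apply: commrV; apply: commrB; first exact: commr1.
      apply: commZ; apply: commrM => //; apply: commrB; first exact: commr1.
      exact: commr_refl.
    have hST2 : GRing.comm S^-1 (D * Nn^-1).
      rewrite -hTV; apply: commrV; apply: commr_sym; apply: commrV; exact: commr_sym.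
    apply: commrXz; apply: commr_sym; apply: commrXz; exact: hST2.
have hXiV : Xi'^-1 = cj Pi Xi by rewrite hXi' -(cjV hP) invrK.
have hKV : K^-1 \is a GRing.unit by rewrite unitrV.
set M0 := Xi^-1 - K * Xi * K in hM *.
have hKM : K^-1 * M0 \is a GRing.unit by rewrite -mxmulE unitmx_mul hKV hM.
have hM' : Xi'^-1 - K' * Xi' * K' = cj Pi (- (K^-1 * M0 * K^-1)).
  rewrite hXiV hK' hXi' -!(cjM hP) -cjB; congr (cj Pi _).
  rewrite /M0 mulrBr mulrBl opprB !mulrA mulVr // mul1r mulrK //.
have hM'V : (Xi'^-1 - K' * Xi' * K')^-1 = cj Pi (- (K * M0^-1 * K)).
  rewrite hM' -(cjV hP) invrN (invrM hKM hKV) (invrM hKV hM) !invrK mulrA //.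
split.
  rewrite /Ufun hM'V /U' /V' sandwich; congr (_ *m _ *m _).
  rewrite cjN mulrN mulNr opprK /cj.
  by rewrite !mulrA !divrK // mulVr // mul1r mulrK.
rewrite /Dfun hM'V /U' /V' sandwich -mulmxDl -mulmxDr; congr (_ *m _ *m _).
have e3 : K^-1 = K^-1 * M0 * M0^-1 by rewrite mulrK.
have e4 : K^-1 * M0 = K^-1 * Xi^-1 - Xi * K.
  by rewrite /M0 mulrBr !mulrA mulVr // mul1r.
rewrite [X in _ = _ + X]e3 e4 mulrBl addrC subrK.
rewrite hXi' hK' cjN !mulrN !mulNr opprK -!(cjM hP) /cj.
by rewrite !mulrA !divrK // mulrK.
Qed.
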